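(* For every $(\varepsilon,\delta)\in\mathbb{R}^2$, the following relations hold for transformations of the set of marked boxes: $$\sigma_{(-\varepsilon,-\delta)}=\sigma_{(\varepsilon,\delta)}^{-1}\qquad\text{and}\qquad i\,\sigma_{(\varepsilon,\delta)}=\sigma_{(-\varepsilon,-\delta)}\,i.$$
   Context: Let $V$ be a 3-dimensional real vector space. An overmarked box is $\Theta=((p,q,r,s;t,b),(P,Q,R,S;T,B))$ with $p,\dots,b\in\mathbf{P}(V)$ and lines $P,\dots,B$ of $\mathbf{P}(V)$ such that $P=ts$, $Q=tr$, $R=bq$, $S=bp$, $T=pq$, $B=rs$ (here $xy$ is the line through $x,y$) and $T\cap B\notin\{p,q,r,s,t,b\}$. A $\Theta$-basis is a basis of $V$, unique up to scaling, in which $p=[-1:1:0]$, $q=[1:1:0]$, $r=[1:0:1]$, $s=[-1:0:1]$. A marked box is an orbit of $\Theta$ under the involution $j:\Theta\mapsto((q,p,s,r;t,b),(Q,P,S,R;T,B))$. The involution $i$ maps $\Theta$ to $((s,r,p,q;b,t),(R,S,Q,P;B,T))$; it commutes with $j$ and acts on marked boxes. For $(\varepsilon,\delta)\in\mathbb{R}^2$ let $$\Sigma_{(\varepsilon,\delta)}=\begin{pmatrix}1&0&0\\0&e^{-\delta}\cosh\varepsilon&-\sinh\varepsilon\\0&-\sinh\varepsilon&e^{\delta}\cosh\varepsilon\end{pmatrix}$$ and let $\sigma_{(\varepsilon,\delta)}(\Theta)$ be the image of $\Theta$ under the projective transformation with matrix $\Sigma_{(\varepsilon,\delta)}$ in a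 $\Theta$-basis; it commutes with $j$ and thus acts on marked boxes. *)

(* Defs.v *)
From HB Require Import structures.
From mathcomp Require Import all_boot all_order all_algebra.
From mathcomp Require Import classical_sets reals.
From mathcomp Require Import sequences exp.
Set Implicit Arguments. Unset Strict Implicit. Unset Printing Implicit Defensive.
Import Order.TTheory GRing.Theory Num.Theory.
Local Open Scope ring_scope.

Section Boxes.
Variable R : realType.

Definition cosh (x : R) : R := (expR x + expR (- x)) / 2.
Definition sinh (x : R) : R := (expR x - expR (- x)) / 2.

(* A subspace of V = R^3 is represented canonically by the square matrix
   <<A>>%MS (genmx), so that equal subspaces are equal matrices. *)
Definition is_point (x : 'M[R]_3) : Prop := \rank x = 1%N /\ <<x>>%MS = x.
Definition is_line (X : 'M[R]_3) : Prop := \rank X = 2%N /\ <<X>>%MS = X.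

Definition join (x y : 'M[R]_3) : 'M[R]_3 := (x + y)%MS.

Definition pt (v : 'rV[R]_3) : 'M[R]_3 := <<v>>%MS.

Definition vec3 (a b c : R) : 'rV[R]_3 :=
  \row_(k < 3) (if k == 0 :> nat then a else if k == 1 :> nat then b else c).

Record obox := Obox {
  bp : 'M[R]_3; bq : 'M[R]_3; br : 'M[R]_3; bs : 'M[R]_3; bt : 'M[R]_3; bb : 'M[R]_3;
  bP : 'M[R]_3; bQ : 'M[R]_3; bR : 'M[R]_3; bS : 'M[R]_3; bT : 'M[R]_3; bB : 'M[R]_3 }.

Definition is_obox (X : obox) : Prop :=
  (is_point (bp X) /\ is_point (bq X) /\ is_point (br X) /\ is_point (bs X) /\
   is_point (bt X) /\ is_point (bb X)) /\
  (is_line (bP X) /\ is_line (bQ X) /\ is_line (bR X) /\ is_line (bS X) /\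
   is_line (bT X) /\ is_line (bB X)) /\
  (bP X = join (bt X) (bs X) /\ bQ X = join (bt X) (br X) /\
   bR X = join (bb X) (bq X) /\ bS X = join (bb X) (bp X) /\
   bT X = join (bp X) (bq X) /\ bB X = join (br X) (bs X)) /\
  bT X != bB X /\
  let z := (bT X :&: bB X)%MS in
  (z != bp X /\ z != bq X /\ z != br X /\ z != bs X /\ z != bt X /\ z != bb X).

(* Theta-basis: rows of the invertible matrix M are the basis vectors, so that
   the vector with coordinates x is x *m M. *)
Definition is_tbasis (X : obox) (M : 'M[R]_3) : Prop :=
  M \in unitmx /\
  [/\ bp X = pt (vec3 (-1) 1 0 *m M), bq X = pt (vec3 1 1 0 *m M),
      br X = pt (vec3 1 0 1 *m M) & bs X = pt (vec3 (-1) 0 1 *m M)].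

Definition ptrans (g : 'M[R]_3) (x : 'M[R]_3) : 'M[R]_3 := <<x *m g>>%MS.
Definition map_box (g : 'M[R]_3) (X : obox) : obox :=
  Obox (ptrans g (bp X)) (ptrans g (bq X)) (ptrans g (br X)) (ptrans g (bs X))
       (ptrans g (bt X)) (ptrans g (bb X))
       (ptrans g (bP X)) (ptrans g (bQ X)) (ptrans g (bR X)) (ptrans g (bS X))
       (ptrans g (bT X)) (ptrans g (bB X)).

Definition Sigma (e d : R) : 'M[R]_3 :=
  \matrix_(i < 3, k < 3)
    (if (i == 0 :> nat) && (k == 0 :> nat) then 1
     else if (i == 1 :> nat) && (k == 1 :> nat) then expR (- d) * cosh e
     else if (i == 1 :> nat) && (k == 2 :> nat) then - sinh e
     else if (i == 2 :> nat) && (k == 1 :> nat) then - sinh e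
     else if (i == 2 :> nat) && (k == 2 :> nat) then expR d * cosh e
     else 0).

(* sigma_(e,d)(X) = Y : Y is the image of X under the projective map with
   matrix Sigma in a Theta-basis of X.  In coordinates x (row) |-> x Sigma^T
   = x Sigma (Sigma is symmetric), i.e. on vectors v |-> v M^-1 Sigma M.
   Stated as a relation (functional on overmarked boxes, since the Theta-basis
   is unique up to scaling). *)
Definition sigma_rel (e d : R) (X Y : obox) : Prop :=
  is_obox X /\
  exists M, is_tbasis X M /\ Y = map_box (invmx M *m Sigma e d *m M) X.

Definition jbox (X : obox) : obox :=
  Obox (bq X) (bp X) (bs X) (br X) (bt X) (bb X)
       (bQ X) (bP X) (bS X) (bR X) (bT X) (bB X).

Definition ibox (X : obox) : obox :=
  Obox (bs X) (br X) (bp X) (bq X) (bb X) (bt X)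
       (bR X) (bS X) (bQ X) (bP X) (bB X) (bT X).

Local Open Scope classical_set_scope.

(* the marked box of X: its orbit under j *)
Definition mbox (X : obox) : set obox := [set Y | Y = X \/ Y = jbox X].
Definition is_mbox (A : set obox) : Prop := exists X, is_obox X /\ A = mbox X.

Definition rel_image (Rl : obox -> obox -> Prop) (A : set obox) : set obox :=
  [set Y | exists2 X, A X & Rl X Y].
Definition sigma_mb (e d : R) (A : set obox) : set obox := rel_image (sigma_rel e d) A.
Definition i_mb (A : set obox) : set obox := ibox @` A.

End Boxes.

(* Main.v *)
Require Import Defs.
From HB Require Import structures.
From mathcomp Require Import all_boot all_order all_algebra.
From mathcomp Require Import classical_sets reals.
From mathcomp Require Import sequences exp.
From mathcomp Require Import ring lra.
Set Implicit Arguments. Unset Strict Implicit. Unset Printing Implicit Defensive.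
Import Order.TTheory GRing.Theory Num.Theory.
Local Open Scope ring_scope.

Section Aux.
Variable R : realType.
Implicit Types (x y T B r s : 'M[R]_3) (u v w : 'rV[R]_3).

Lemma eq_gen x y : <<x>>%MS = x -> <<y>>%MS = y -> (x == y)%MS -> x = y.
Proof. by move=> hx hy /genmxP; rewrite hx hy. Qed.

Lemma meet_pt T B x : is_line T -> is_line B -> T != B -> is_point x ->
  (x <= T)%MS -> (x <= B)%MS -> (T :&: B)%MS = x.
Proof.
move=> [rT gT] [rB gB] TB [rx gx] xT xB.
have gz : <<(T :&: B)>>%MS = (T :&: B)%MS by rewrite genmx_cap gT gB.
have sT := capmxSl T B; have sB := capmxSr T B.
have xz : (x <= T :&: B)%MS by rewrite sub_capmx xT xB.
have r1 : (\rank (T :&: B) <= 1)%N.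
  rewrite leqNgt; apply/negP => h.
  have h2: \rank (T :&: B) = 2%N.
    by have := mxrankS sT; rewrite rT => hle; apply/eqP; rewrite eqn_leq h hle.
  have e1 : (T :&: B == T)%MS by rewrite -(mxrank_leqif_eq sT).2 h2 rT.
  have e2 : (T :&: B == B)%MS by rewrite -(mxrank_leqif_eq sB).2 h2 rB.
  move/eqP: TB; apply; apply: eq_gen gT gB _.
  case/andP: e1 => _ e1; case/andP: e2 => _ e2.
  by apply/andP; split; [apply: submx_trans e1 sB | apply: submx_trans e2 sT].
have hxz : (x == T :&: B)%MS.
  by rewrite -(mxrank_leqif_eq xz).2 rx eqn_leq r1 -{1}rx mxrankS.
apply: eq_gen gz gx _; case/andP: hxz => h1 h2; by apply/andP; split.
Qed.


Lemma third B r s y : is_line B -> B = (r + s)%MS -> is_point y -> is_point r ->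
  (s <= y + r)%MS -> (y <= B)%MS.
Proof.
move=> [rB gB] eB [ry gy] [rr gr] hs.
have hB : (B <= y + r)%MS by rewrite eB addsmx_sub addsmxSr hs.
have hle : (\rank (y + r) <= 2)%N.
  by have := (mxrank_adds_leqif y r).1; rewrite ry rr.
have e : (B == y + r)%MS.
  by rewrite -(mxrank_leqif_eq hB).2 rB eqn_leq hle -{1}rB mxrankS.
case/andP: e => _ e; exact: submx_trans (addsmxSl y r) e.
Qed.

Lemma oboxE (X : obox R) : is_obox X ->
  (is_point (bp X) /\ is_point (bq X) /\ is_point (br X) /\ is_point (bs X) /\
      is_point (bt X) /\ is_point (bb X)) /\
  (is_line (bP X) /\ is_line (bQ X) /\ is_line (bR X) /\ is_line (bS X) /\
      is_line (bT X) /\ is_line (bB X)) /\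
  (bP X = join (bt X) (bs X) /\ bQ X = join (bt X) (br X) /\
      bR X = join (bb X) (bq X) /\ bS X = join (bb X) (bp X) /\
      bT X = join (bp X) (bq X) /\ bB X = join (br X) (bs X)) /\
  bT X != bB X /\
  ((bT X :&: bB X)%MS != bp X /\ (bT X :&: bB X)%MS != bq X /\
      (bT X :&: bB X)%MS != br X /\ (bT X :&: bB X)%MS != bs X /\
      (bT X :&: bB X)%MS != bt X /\ (bT X :&: bB X)%MS != bb X).
Proof. by []. Qed.

Lemma gp (X : obox R) : is_obox X ->
  [/\ ~~ (br X <= bp X + bq X)%MS, ~~ (bs X <= bp X + bq X)%MS,
      ~~ (bs X <= bq X + br X)%MS & ~~ (bs X <= bp X + br X)%MS].
Proof.
case/oboxE=> [[hp [hq [hr [hs [ht hb]]]]] [[hP [hQ [hR [hS [hT hB]]]]]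
  [[eP [eQ [eR [eS [eT eB]]]]] [TB [zp [zq [zr [zs [zt zb]]]]]]]]].
have sT : forall y, (y <= bp X + bq X)%MS -> (y <= bT X)%MS by move=> y; rewrite eT.
split; apply/negP => h.
- move/eqP: zr; apply; apply: meet_pt => //; first exact: sT.
  by rewrite eB /join addsmxSl.
- move/eqP: zs; apply; apply: meet_pt => //; first exact: sT.
  by rewrite eB /join addsmxSr.
- move/eqP: zq; apply; apply: meet_pt => //; first by rewrite eT /join addsmxSr.
  exact: third h.
- move/eqP: zp; apply; apply: meet_pt => //; first by rewrite eT /join addsmxSl.
  exact: third h.
Qed.


Definition o0 : 'I_3 := @Ordinal 3 0 isT.
Definition o1 : 'I_3 := @Ordinal 3 1 isT.
Definition o2 : 'I_3 := @Ordinal 3 2 isT.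

Definition mk3 (u v w : 'rV[R]_3) : 'M[R]_3 :=
  \matrix_(i, j) (if i == 0 :> nat then u 0 j else if i == 1 :> nat then v 0 j else w 0 j).

Lemma vec3_mk3 (a b c : R) u v w :
  vec3 a b c *m mk3 u v w = a *: u + b *: v + c *: w.
Proof.
apply/rowP => j; rewrite !mxE !big_ord_recr big_ord0 /= !mxE /=.
by rewrite add0r.
Qed.

Lemma mk3_row (K : 'M[R]_3) : K = mk3 (row o0 K) (row o1 K) (row o2 K).
Proof.
apply/matrixP => i j; rewrite !mxE.
by case: i => [[|[|[|i]]] Hi] //=; congr (K _ j); apply: val_inj.
Qed.

Lemma vec3_mul (a b c : R) (K : 'M[R]_3) :
  vec3 a b c *m K = a *: row o0 K + b *: row o1 K + c *: row o2 K.
Proof. by rewrite {1}(mk3_row K) vec3_mk3. Qed.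

Lemma rV_vec3 (c : 'rV[R]_3) : c = vec3 (c 0 o0) (c 0 o1) (c 0 o2).
Proof.
apply/rowP => j; rewrite !mxE.
case: j => [[|[|[|j]]] Hj] //=; congr (c _ _); apply: val_inj => //.
Qed.

Lemma vec3N (a b c : R) : vec3 (- a) (- b) (- c) = - vec3 a b c.
Proof. by apply/rowP => j; rewrite !mxE; case: ifP => _ //; case: ifP. Qed.

Lemma vec3_entries (a b c : R) :
  [/\ vec3 a b c 0 o0 = a, vec3 a b c 0 o1 = b & vec3 a b c 0 o2 = c].
Proof. by rewrite !mxE. Qed.


Lemma pt_ex x : is_point x -> exists a : 'rV[R]_3, x = pt a.
Proof.
move=> [rx gx]; exists (nz_row x).
have s := nz_row_sub x.
have nz : nz_row x != 0.
  by rewrite nz_row_eq0 -mxrank_eq0 rx.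
have e : (nz_row x == x)%MS by rewrite -(mxrank_leqif_eq s).2 rank_rV nz rx.
by rewrite /pt -{1}gx; apply/genmxP; case/andP: e => e1 e2; apply/andP.
Qed.

Lemma mk3_eqmx u v w : (mk3 u v w :=: u + (v + w))%MS.
Proof.
apply/eqmxP/andP; split.
  apply/row_subP => i; case: i => [[|[|[|i]]] Hi] //.
  - have -> : row (Ordinal Hi) (mk3 u v w) = u by apply/rowP => j; rewrite !mxE.
    exact: addsmxSl.
  - have -> : row (Ordinal Hi) (mk3 u v w) = v by apply/rowP => j; rewrite !mxE.
    exact: submx_trans (addsmxSl v w) (addsmxSr u _).
  - have -> : row (Ordinal Hi) (mk3 u v w) = w by apply/rowP => j; rewrite !mxE.
    exact: submx_trans (addsmxSr v w) (addsmxSr u _).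
rewrite !addsmx_sub; apply/and3P; split; apply/submxP.
- by exists (vec3 1 0 0); rewrite vec3_mk3 scale1r !scale0r !addr0.
- by exists (vec3 0 1 0); rewrite vec3_mk3 scale1r !scale0r addr0 add0r.
- by exists (vec3 0 0 1); rewrite vec3_mk3 scale1r !scale0r !add0r.
Qed.

Lemma ptk u v w : (pt w <= pt u + pt v)%MS = (w <= u + v)%MS.
Proof. by rewrite /pt -genmx_adds !genmxE. Qed.

Lemma pt_scale (a : R) u : a != 0 -> pt (a *: u) = pt u.
Proof. by move=> h; rewrite /pt; apply: eq_genmx; apply: eqmx_scale. Qed.


Lemma rank3 u v w : (\rank (u + v)%MS = 2)%N -> ~~ (w <= u + v)%MS ->
  mk3 u v w \in unitmx.
Proof.
move=> r2 nw; rewrite -row_full_unit /row_full (mk3_eqmx u v w) addsmxA.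
have := mxrank_leqif_sup (addsmxSl (u + v)%MS w).
case=> h1 h2; move: h2; rewrite addsmx_sub submx_refl /= (negbTE nw) r2 => h2; rewrite r2 in h1.
by rewrite eqn_leq rank_leq_col /= ltn_neqAle h2 h1.
Qed.

Lemma tbasis_ex (X : obox R) : is_obox X -> exists M, is_tbasis X M.
Proof.
move=> hX; have [g1 g2 g3 g4] := gp hX.
case/oboxE: hX => [[hp [hq [hr [hs _]]]] [[_ [_ [_ [_ [hT _]]]]] [[_ [_ [_ [_ [eT _]]]]] _]]].
have [a ea] := pt_ex hp; have [b eb] := pt_ex hq.
have [c ec] := pt_ex hr; have [d ed] := pt_ex hs.
move: g1 g2 g3 g4; rewrite ea eb ec ed !ptk => g1 g2 g3 g4.
have r2 : \rank (a + b)%MS = 2%N.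
  by case: hT => h _; move: h; rewrite eT /join ea eb /pt -genmx_adds genmxE.
have uA := rank3 r2 g1.
have [co eco] : exists co, d = co *m mk3 a b c.
  by apply/submxP; apply: submx_full; rewrite row_full_unit.
rewrite (rV_vec3 co) vec3_mk3 in eco.
set al := co 0 o0 in eco; set be := co 0 o1 in eco; set ga := co 0 o2 in eco.
have hal : al != 0.
  apply/negP => /eqP h; move: g3; rewrite eco h scale0r add0r.
  by move/negP; apply; apply: addmx_sub_adds; apply: scalemx_sub.
have hbe : be != 0.
  apply/negP => /eqP h; move: g4; rewrite eco h scale0r addr0.
  by move/negP; apply; apply: addmx_sub_adds; apply: scalemx_sub.
have hga : ga != 0.
  apply/negP => /eqP h; move: g2; rewrite eco h scale0r addr0.
  by move/negP; apply; apply: addmx_sub_adds; apply: scalemx_sub.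
pose m0 := - (2^-1) *: (al *: a + be *: b).
pose m1 := 2^-1 *: (al *: a - be *: b).
pose m2 := ga *: c + 2^-1 *: (al *: a + be *: b).
pose M := mk3 m0 m1 m2.
have e1 : vec3 (-1) 1 0 *m M = al *: a.
  by rewrite vec3_mk3; apply/rowP => j; rewrite !mxE; field.
have e2 : vec3 1 1 0 *m M = (- be) *: b.
  by rewrite vec3_mk3; apply/rowP => j; rewrite !mxE; field.
have e3 : vec3 1 0 1 *m M = ga *: c.
  by rewrite vec3_mk3; apply/rowP => j; rewrite !mxE; field.
have e4 : vec3 (-1) 0 1 *m M = d.
  by rewrite eco vec3_mk3; apply/rowP => j; rewrite !mxE; field.
exists M; split; last first.
  by rewrite e1 e2 e3 e4 !pt_scale ?oppr_eq0.
rewrite -row_full_unit /row_full eqn_leq rank_leq_col /=.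
apply: (@leq_trans (\rank (mk3 a b c))); first by rewrite mxrank_unit. apply: mxrankS.
rewrite (mk3_eqmx a b c) !addsmx_sub.
rewrite -(eqmx_scale a hal) -(eqmx_scale b (_ : - be != 0)) ?oppr_eq0 //.
by rewrite -(eqmx_scale c hga) -e1 -e2 -e3 !submxMl.
Qed.


Lemma ord3 (i : 'I_3) : i = o0 \/ i = o1 \/ i = o2.
Proof.
case: i => [[|[|[|i]]] Hi] //; [left|right;left|right;right]; exact: val_inj.
Qed.

Lemma rv3E (u v : 'rV[R]_3) : u = v ->
  [/\ u 0 o0 = v 0 o0, u 0 o1 = v 0 o1 & u 0 o2 = v 0 o2].
Proof. by move=> ->. Qed.

Lemma pt_step v (M N : 'M[R]_3) : M \in unitmx -> pt (v *m N) = pt (v *m M) ->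
  exists l : R, v *m (N *m invmx M) = l *: v.
Proof.
move=> uM /genmxP /andP [h _]; have := submxMr (invmx M) h.
by rewrite mulmxK // -mulmxA => /sub_rVP.
Qed.

Lemma tbasis_uniq (X : obox R) M N (S : 'M[R]_3) : is_tbasis X M -> is_tbasis X N ->
  invmx N *m S *m N = invmx M *m S *m M.
Proof.
move=> [uM [p1 q1 r1 s1]] [uN [p2 q2 r2 s2]].
have [l1 h1] := pt_step uM (etrans (esym p2) p1).
have [l2 h2] := pt_step uM (etrans (esym q2) q1).
have [l3 h3] := pt_step uM (etrans (esym r2) r1).
have [l4 h4] := pt_step uM (etrans (esym s2) s1).
have eK : N *m invmx M = l1%:M.
  move: (N *m invmx M) h1 h2 h3 h4 => K h1 h2 h3 h4.
  rewrite vec3_mul in h1; rewrite vec3_mul in h2; rewrite vec3_mul in h3; rewrite vec3_mul in h4.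
  have [a1 a2 a3] := rv3E h1; have [b1 b2 b3] := rv3E h2.
  have [c1 c2 c3] := rv3E h3; have [d1 d2 d3] := rv3E h4.
  rewrite !mxE /= in a1 a2 a3 b1 b2 b3 c1 c2 c3 d1 d2 d3.
  apply/matrixP => i j; rewrite !mxE.
  case: (ord3 i) => [->|[->|->]]; case: (ord3 j) => [->|[->|->]] /=; lra.
have eN : N = l1 *: M by rewrite -mul_scalar_mx -eK mulmxKV.
have hl : l1 != 0.
  apply/negP => /eqP h0; move: uN; rewrite eN h0 scale0r -row_full_unit.
  by rewrite /row_full mxrank0.
rewrite eN invmxZ; last by rewrite -eN. rewrite -!scalemxAl -scalemxAr scalerA mulVf //.
by rewrite scale1r.
Qed.


Implicit Types (g h : 'M[R]_3).

Lemma ptrans_comp g h x : ptrans h (ptrans g x) = ptrans (g *m h) x.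
Proof. by rewrite /ptrans mulmxA; apply: eq_genmx; apply: eqmxMr; exact: genmxE. Qed.

Lemma map_box_comp g h (X : obox R) : map_box h (map_box g X) = map_box (g *m h) X.
Proof. by rewrite /map_box /= !ptrans_comp. Qed.

Lemma ptrans1 x : <<x>>%MS = x -> ptrans 1%:M x = x.
Proof. by rewrite /ptrans mulmx1. Qed.

Lemma map_box1 (X : obox R) : is_obox X -> map_box 1%:M X = X.
Proof.
case/oboxE=> [[[_ hp] [[_ hq] [[_ hr] [[_ hs] [[_ ht] [_ hb]]]]]]
  [[[_ hP] [[_ hQ] [[_ hR] [[_ hS] [[_ hT] [_ hB]]]]]] _]].
by case: X hp hq hr hs ht hb hP hQ hR hS hT hB => /= *; rewrite /map_box /= !ptrans1.
Qed.

Lemma pt_ptrans g w : ptrans g (pt w) = pt (w *m g).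
Proof. by rewrite /ptrans /pt; apply: eq_genmx; apply: eqmxMr; exact: genmxE. Qed.

Lemma ptrans_point g x : g \in unitmx -> is_point x -> is_point (ptrans g x).
Proof.
move=> ug [rx gx]; split; last by rewrite /ptrans genmx_id.
by rewrite /ptrans genmxE mxrankMfree // row_free_unit.
Qed.

Lemma ptrans_line g x : g \in unitmx -> is_line x -> is_line (ptrans g x).
Proof.
move=> ug [rx gx]; split; last by rewrite /ptrans genmx_id.
by rewrite /ptrans genmxE mxrankMfree // row_free_unit.
Qed.

Lemma ptrans_join g x y : ptrans g (join x y) = join (ptrans g x) (ptrans g y).
Proof. by rewrite /join /ptrans -genmx_adds; apply: eq_genmx; apply: addsmxMr. Qed.

Lemma ptrans_sub g x y : g \in unitmx -> (ptrans g x <= ptrans g y)%MS -> (x <= y)%MS.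
Proof.
move=> ug; rewrite /ptrans !genmxE => /(submxMr (invmx g)).
by rewrite !mulmxK.
Qed.

Lemma ptrans_inj g x y : g \in unitmx -> <<x>>%MS = x -> <<y>>%MS = y ->
  ptrans g x = ptrans g y -> x = y.
Proof.
move=> ug gx gy e; rewrite -(ptrans1 gx) -(ptrans1 gy) -(mulmxV ug).
by rewrite -!ptrans_comp e.
Qed.

Lemma obox_map g (X : obox R) : g \in unitmx -> is_obox X -> is_obox (map_box g X).
Proof.
move=> ug hX.
case/oboxE: (hX) => [[hp [hq [hr [hs [ht hb]]]]] [[hP [hQ [hR [hS [hT hB]]]]]
  [[eP [eQ [eR [eS [eT eB]]]]] [TB [zp [zq [zr [zs [zt zb]]]]]]]]].
have zz : forall x, is_point x -> (bT X :&: bB X)%MS != x ->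
    (ptrans g (bT X) :&: ptrans g (bB X))%MS != ptrans g x.
  move=> x hx zx; apply/negP => /eqP e; move/eqP: zx; apply.
  apply: meet_pt => //.
    by apply: (ptrans_sub ug); rewrite -e capmxSl.
  by apply: (ptrans_sub ug); rewrite -e capmxSr.
have P := ptrans_point ug; have L := ptrans_line ug.
split; first exact: (conj (P _ hp) (conj (P _ hq) (conj (P _ hr) (conj (P _ hs) (conj (P _ ht) (P _ hb)))))).
split; first exact: (conj (L _ hP) (conj (L _ hQ) (conj (L _ hR) (conj (L _ hS) (conj (L _ hT) (L _ hB)))))).
split; first by rewrite /= eP eQ eR eS eT eB !ptrans_join.
split; last exact: (conj (zz _ hp zp) (conj (zz _ hq zq) (conj (zz _ hr zr) (conj (zz _ hs zs) (conj (zz _ ht zt) (zz _ hb zb)))))).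
apply/negP => /eqP e; move/eqP: TB; apply.
  by apply: (ptrans_inj ug _ _ e); [case: hT | case: hB].
Qed.


Lemma vec3Z (a x y z : R) : a *: vec3 x y z = vec3 (a * x) (a * y) (a * z).
Proof. by apply/rowP => j; rewrite !mxE; case: ifP => _ //; case: ifP. Qed.

Lemma vec3D (x y z x' y' z' : R) :
  vec3 x y z + vec3 x' y' z' = vec3 (x + x') (y + y') (z + z').
Proof. by apply/rowP => j; rewrite !mxE; case: ifP => _ //; case: ifP. Qed.

Lemma mk3_mul u v w (B : 'M[R]_3) : mk3 u v w *m B = mk3 (u *m B) (v *m B) (w *m B).
Proof.
apply/matrixP => i j; rewrite !mxE.
by case: (ord3 i) => [->|[->|->]]; rewrite ?mxE; apply: eq_bigr => k _; rewrite ?mxE.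
Qed.

Lemma mk3_1 : 1%:M = mk3 (vec3 1 0 0) (vec3 0 1 0) (vec3 0 0 1) :> 'M[R]_3.
Proof.
apply/matrixP => i j; rewrite !mxE.
by case: (ord3 i) => [->|[->|->]]; case: (ord3 j) => [->|[->|->]]; rewrite ?mxE.
Qed.

Lemma Sigma_mk3 (e d : R) : Sigma e d =
  mk3 (vec3 1 0 0) (vec3 0 (expR (- d) * cosh e) (- sinh e))
      (vec3 0 (- sinh e) (expR d * cosh e)).
Proof.
apply/matrixP => i j; rewrite !mxE.
by case: (ord3 i) => [->|[->|->]]; case: (ord3 j) => [->|[->|->]]; rewrite ?mxE.
Qed.


Ltac scal := rewrite /cosh /sinh ?opprK ?expRN;
  have := expR_gt0 (_ : R); try field;
  rewrite ?gt_eqF ?expR_gt0 //.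

Lemma Sigma_inv (e d : R) : Sigma e d *m Sigma (- e) (- d) = 1%:M.
Proof.
rewrite !Sigma_mk3 mk3_mul !vec3_mk3 !vec3Z !vec3D mk3_1.
have he : expR e != 0 by rewrite gt_eqF ?expR_gt0.
have hd : expR d != 0 by rewrite gt_eqF ?expR_gt0.
congr mk3; congr vec3; rewrite /cosh /sinh ?opprK ?expRN; field; by rewrite ?he ?hd.
Qed.


Definition Qm : 'M[R]_3 := mk3 (vec3 1 0 0) (vec3 0 0 1) (vec3 0 (-1) 0).
Definition Qi : 'M[R]_3 := mk3 (vec3 1 0 0) (vec3 0 0 (-1)) (vec3 0 1 0).

Lemma Q_inv : Qm *m Qi = 1%:M.
Proof.
rewrite /Qm /Qi mk3_mul !vec3_mk3 !vec3Z !vec3D mk3_1.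
by congr mk3; congr vec3; ring.
Qed.

Lemma Q_conj (e d : R) : Qi *m Sigma (- e) (- d) *m Qm = Sigma e d.
Proof.
rewrite /Qm /Qi !Sigma_mk3 !mk3_mul !vec3_mk3 !vec3Z !vec3D.
rewrite !vec3_mk3 !vec3Z !vec3D.
by congr mk3; congr vec3; rewrite /cosh /sinh ?opprK; ring.
Qed.

Lemma vec3_Q (x y z : R) : vec3 x y z *m Qm = vec3 x (- z) y.
Proof. by rewrite /Qm vec3_mk3 !vec3Z !vec3D; congr vec3; ring. Qed.

Lemma inv_uniq (A B : 'M[R]_3) : A \in unitmx -> A *m B = 1%:M -> invmx A = B.
Proof. by move=> uA h; rewrite -[RHS](mulKmx uA) h mulmx1. Qed.

Lemma ptN w : pt (- w) = pt w.
Proof. by rewrite /pt; apply: eq_genmx; apply: eqmx_opp. Qed.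

Lemma Sigma_unit (e d : R) : Sigma e d \in unitmx.
Proof. exact: (mulmx1_unit (Sigma_inv e d)).1. Qed.

Lemma Qm_unit : Qm \in unitmx.
Proof. exact: (mulmx1_unit Q_inv).1. Qed.

Lemma tbasis_map (X : obox R) M G : G \in unitmx -> is_tbasis X M ->
  is_tbasis (map_box (invmx M *m G *m M) X) (G *m M).
Proof.
move=> uG [uM [p1 q1 r1 s1]]; split; first by rewrite unitmx_mul uG.
rewrite /map_box /= p1 q1 r1 s1 !pt_ptrans.
by rewrite !mulmxA !(mulmxK uM).
Qed.

Lemma tbasis_i (X : obox R) M : is_tbasis X M -> is_tbasis (ibox X) (Qm *m M).
Proof.
move=> [uM [p1 q1 r1 s1]]; split; first by rewrite unitmx_mul Qm_unit.
rewrite /ibox /= p1 q1 r1 s1 !mulmxA !vec3_Q !oppr0.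
have e1 : vec3 1 (-1) 0 = - vec3 (-1) 1 0 :> 'rV[R]_3.
  by rewrite -vec3N opprK oppr0.
have e2 : vec3 (-1) (-1) 0 = - vec3 1 1 0 :> 'rV[R]_3.
  by rewrite -vec3N oppr0.
by rewrite e1 e2 !mulNmx !ptN.
Qed.

Lemma obox_i (X : obox R) : is_obox X -> is_obox (ibox X).
Proof.
case/oboxE=> [[hp [hq [hr [hs [ht hb]]]]] [[hP [hQ [hR [hS [hT hB]]]]]
  [[eP [eQ [eR [eS [eT eB]]]]] [TB [zp [zq [zr [zs [zt zb]]]]]]]]].
split; first exact: (conj hs (conj hr (conj hp (conj hq (conj hb ht))))).
split; first exact: (conj hR (conj hS (conj hQ (conj hP (conj hB hT))))).
split; first exact: (conj eR (conj eS (conj eQ (conj eP (conj (etrans eB (addsmxC _ _)) eT))))).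
split; first by rewrite /= eq_sym.
rewrite /= capmxC; exact: (conj zs (conj zr (conj zp (conj zq (conj zb zt))))).
Qed.

Lemma obox_j (X : obox R) : is_obox X -> is_obox (jbox X).
Proof.
case/oboxE=> [[hp [hq [hr [hs [ht hb]]]]] [[hP [hQ [hR [hS [hT hB]]]]]
  [[eP [eQ [eR [eS [eT eB]]]]] [TB [zp [zq [zr [zs [zt zb]]]]]]]]].
split; first exact: (conj hq (conj hp (conj hs (conj hr (conj ht hb))))).
split; first exact: (conj hQ (conj hP (conj hS (conj hR (conj hT hB))))).
split; first exact: (conj eQ (conj eP (conj eS (conj eR (conj (etrans eT (addsmxC _ _)) (etrans eB (addsmxC _ _))))))).
split; first by [].
exact: (conj zq (conj zp (conj zs (conj zr (conj zt zb))))).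
Qed.

Lemma sig_char (e d : R) (X : obox R) M Y : is_obox X -> is_tbasis X M ->
  sigma_rel e d X Y <-> Y = map_box (invmx M *m Sigma e d *m M) X.
Proof.
move=> hX hM; split.
  by case=> _ [N [hN ->]]; rewrite (tbasis_uniq _ hM hN).
by move=> ->; split => //; exists M.
Qed.

Lemma sig_back (e d : R) (X : obox R) M Z : is_obox X -> is_tbasis X M ->
  sigma_rel (- e) (- d) (map_box (invmx M *m Sigma e d *m M) X) Z <-> Z = X.
Proof.
move=> hX hM; have uM := hM.1.
have uS := Sigma_unit e d.
have hY : is_obox (map_box (invmx M *m Sigma e d *m M) X).
  by apply: obox_map => //; rewrite !unitmx_mul unitmx_inv uM uS.
rewrite (sig_char _ _ _ hY (tbasis_map uS hM)) map_box_comp.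
have -> : invmx (Sigma e d *m M) = invmx M *m Sigma (- e) (- d).
  apply: inv_uniq; first by rewrite unitmx_mul uS.
  by rewrite -mulmxA (mulmxA M) mulmxV // mul1mx Sigma_inv.
have S2 : Sigma (- e) (- d) *m Sigma e d = 1%:M.
  by have := Sigma_inv (- e) (- d); rewrite !opprK.
rewrite !mulmxA (mulmxK uM) -(mulmxA (invmx M) (Sigma e d)) Sigma_inv mulmx1.
rewrite -(mulmxA (invmx M) (Sigma (- e) (- d)) (Sigma e d)) S2 mulmx1.
by rewrite mulVmx // map_box1.
Qed.

Lemma sig_i (e d : R) (X : obox R) M Z : is_obox X -> is_tbasis X M ->
  sigma_rel (- e) (- d) (ibox X) Z <-> Z = ibox (map_box (invmx M *m Sigma e d *m M) X).
Proof.
move=> hX hM; have uM := hM.1.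
rewrite (sig_char _ _ _ (obox_i hX) (tbasis_i hM)).
have -> : invmx (Qm *m M) = invmx M *m Qi.
  apply: inv_uniq; first by rewrite unitmx_mul Qm_unit.
  by rewrite -mulmxA (mulmxA M) mulmxV // mul1mx Q_inv.
have -> : invmx M *m Qi *m Sigma (- e) (- d) *m (Qm *m M) =
          invmx M *m Sigma e d *m M.
  by rewrite -(Q_conj e d) !mulmxA.
suff -> : forall g, map_box g (ibox X) = ibox (map_box g X) by [].
by case: X {hX hM}.
Qed.


Lemma claim1 (e d : R) (A : set (obox R)) : (forall X, A X -> is_obox X) ->
  sigma_mb (- e) (- d) (sigma_mb e d A) = A.
Proof.
move=> hA; rewrite /sigma_mb /rel_image; apply/seteqP; split => Z /=.
- case=> Y [X AX sXY] sYZ; have hX := hA X AX; have [M hM] := tbasis_ex hX.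
  move/(sig_char _ _ _ hX hM): sXY => eY; rewrite eY in sYZ.
  by move/(sig_back _ _ _ hX hM): sYZ => ->.
- move=> AZ; have hZ := hA Z AZ; have [M hM] := tbasis_ex hZ.
  exists (map_box (invmx M *m Sigma e d *m M) Z).
    by exists Z => //; apply/(sig_char _ _ _ hZ hM).
  by apply/(sig_back _ _ _ hZ hM).
Qed.

Lemma claim3 (e d : R) (A : set (obox R)) : (forall X, A X -> is_obox X) ->
  i_mb (sigma_mb e d A) = sigma_mb (- e) (- d) (i_mb A).
Proof.
move=> hA; rewrite /i_mb /sigma_mb /rel_image; apply/seteqP; split => Z /=.
- case=> Y [X AX sXY] <-; have hX := hA X AX; have [M hM] := tbasis_ex hX.
  exists (ibox X); first by exists X.
  apply/(sig_i _ _ _ hX hM); congr ibox; exact/(sig_char _ _ _ hX hM).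
- case=> _ [X AX <-] sZ; have hX := hA X AX; have [M hM] := tbasis_ex hX.
  move/(sig_i _ _ _ hX hM): sZ => ->.
  exists (map_box (invmx M *m Sigma e d *m M) X) => //.
  by exists X => //; apply/(sig_char _ _ _ hX hM).
Qed.

End Aux.

Theorem lemma7p3 (R : realType) (e d : R) (A : set (obox R)) :
  is_mbox A ->
  [/\ sigma_mb (- e) (- d) (sigma_mb e d A) = A,
      sigma_mb e d (sigma_mb (- e) (- d) A) = A &
      i_mb (sigma_mb e d A) = sigma_mb (- e) (- d) (i_mb A)].
Proof.
case=> X0 [h0 ->].
have hA : forall X, mbox X0 X -> is_obox X.
  by move=> X [->|->] //; apply: obox_j.
split; [exact: claim1 | | exact: claim3].
by have := claim1 (- e) (- d) hA; rewrite !opprK.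
Qed.
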